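(* Let $X$ be a $d$-dimensional simplicial complex and let $c$ be a proper coloring of the vertices of $X$ such that no two $(d-1)$-dimensional faces of $X$ have the same pattern. Then $H_{d-1}(X)_T \cong H_{d-1}((X,c))_T$.
   Context: Homology has integer coefficients; $A_T$ denotes the torsion subgroup of an abelian group $A$. A coloring $c$ of $V(X)$ is proper if no two vertices joined by an edge of $X$ receive the same color. The pattern of a face is the multiset of colors of its vertices. For a proper coloring $c$, the pattern complex $(X,c)$ is the simplicial complex on the set of colors of $c$ in which a set $S$ of colors is a face if and only if $S$ is the pattern of some face of $X$. *)

(* Defs.v *)
From HB Require Import structures.
From mathcomp Require Import all_boot all_order all_algebra.
Set Implicit Arguments. Unset Strict Implicit. Unset Printing Implicit Defensive.
Import GRing.Theory Num.Theory.
Local Open Scope ring_scope.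

Definition is_complex (V : finType) (X : {set {set V}}) : Prop :=
  forall s t : {set V}, s \in X -> t \subset s -> t \in X.

Definition has_dim (V : finType) (X : {set {set V}}) (d : nat) : Prop :=
  (exists2 s, s \in X & #|s| = d.+1) /\ (forall s, s \in X -> (#|s| <= d.+1)%N).

Definition proper_coloring (V C : finType) (X : {set {set V}}) (c : V -> C) : Prop :=
  forall u v : V, u != v -> [set u; v] \in X -> c u != c v.

(* Pattern of a face (c is proper, so the multiset of colors is a set). *)
Definition pattern (V C : finType) (c : V -> C) (s : {set V}) : {set C} := c @: s.

Definition pattern_complex (V C : finType) (X : {set {set V}}) (c : V -> C)
  : {set {set C}} := [set pattern c s | s in X].

(* Faces are oriented by the canonical order of the finType V (enum_rank). *)
Definition chains (V : finType) := {ffun {set V} -> int}.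

Definition pos (V : finType) (v : V) (s : {set V}) : nat :=
  #|[set u in s | (enum_rank u < enum_rank v)%N]|.

(* Simplicial boundary; the (-1)-chains are ignored (non-reduced homology). *)
Definition bdry (V : finType) (x : chains V) : chains V :=
  [ffun t : {set V} => if t == set0 then 0
     else \sum_(v | v \notin t) (-1) ^+ pos v (v |: t) * x (v |: t)].

Definition is_chain (V : finType) (X : {set {set V}}) (k : nat) (x : chains V) : Prop :=
  forall s, x s != 0 -> (s \in X) && (#|s| == k.+1).

Definition is_cycle (V : finType) (X : {set {set V}}) (k : nat) (x : chains V) : Prop :=
  is_chain X k x /\ bdry x = 0.

Definition is_boundary (V : finType) (X : {set {set V}}) (k : nat) (x : chains V) : Prop :=
  exists2 e, is_chain X k.+1 e & bdry e = x.

(* Cycles representing torsion classes of H_k(X): some positive multiple is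
   a boundary.  The torsion subgroup H_k(X)_T is the quotient of these cycles
   by the boundaries. *)
Definition is_tors_cycle (V : finType) (X : {set {set V}}) (k : nat) (x : chains V) : Prop :=
  is_cycle X k x /\ exists2 n : nat, (0 < n)%N & is_boundary X k (x *+ n).

(* H_k(X)_T ≅ H_k(Y)_T : a group isomorphism between the quotients
   {torsion cycles}/{boundaries}, presented through an additive lift f on
   chains: f maps torsion cycles to torsion cycles, the induced map on
   classes is well defined and injective (f z is a boundary iff z is), and
   surjective. *)
Definition tors_homology_iso (V W : finType) (X : {set {set V}}) (Y : {set {set W}})
  (k : nat) : Prop :=
  exists f : chains V -> chains W,
    [/\ forall x y, f (x + y) = f x + f y,
        forall z, is_tors_cycle X k z -> is_tors_cycle Y k (f z),
        forall z, is_tors_cycle X k z -> (is_boundary Y k (f z) <-> is_boundary X k z)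
      & forall w, is_tors_cycle Y k w ->
          exists2 z, is_tors_cycle X k z & is_boundary Y k (f z - w)].

(* Main.v *)
Require Import Defs.
From mathcomp Require Import all_boot all_order all_algebra zify.
Set Implicit Arguments. Unset Strict Implicit. Unset Printing Implicit Defensive.
Import GRing.Theory Num.Theory.

Lemma card_sum (T : finType) (s : {set T}) (P : pred T) :
  #|[set u in s | P u]| = (\sum_(u in s) (P u : nat))%N.
Proof.
rewrite -sum1_card big_mkcond /= [RHS]big_mkcond /=; apply: eq_bigr => u _.
by rewrite inE; case: (u \in s); case: (P u).
Qed.

Definition inv (V C : finType) (c : V -> C) (s : {set V}) : nat :=
  (\sum_(a in s) \sum_(b in s)
     ((enum_rank a < enum_rank b) && (enum_rank (c b) < enum_rank (c a))))%N.

Lemma pos_sum (V : finType) (v : V) (s : {set V}) :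
  pos v s = (\sum_(u in s) (enum_rank u < enum_rank v))%N.
Proof. by rewrite /pos card_sum. Qed.

Lemma sign_par (V C : finType) (c : V -> C) (v : V) (t : {set V}) :
  v \notin t -> {in v |: t &, injective c} ->
  odd (inv c (v |: t) + pos (c v) (c @: (v |: t))) = odd (inv c t + pos v (v |: t)).
Proof.
move=> vt injc.
rewrite !pos_sum big_imset //=.
rewrite /inv.
under eq_bigr => a _ do rewrite (big_setU1 _ vt) /=.
rewrite (big_setU1 _ vt) /= !ltnn /= !add0n.
rewrite !(big_setU1 _ vt) /= !ltnn /= !add0n big_split /=.
set I := (\sum_(i in t) \sum_(j in t) _)%N.
have H : (\sum_(u in t) ((enum_rank v < enum_rank u) && (enum_rank (c u) < enum_rank (c v))) +
   \sum_(u in t) ((enum_rank u < enum_rank v) && (enum_rank (c v) < enum_rank (c u))) +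
   \sum_(u in t) (enum_rank (c u) < enum_rank (c v)) =
   \sum_(u in t) (enum_rank u < enum_rank v) +
   (\sum_(u in t) ((enum_rank v < enum_rank u) && (enum_rank (c u) < enum_rank (c v))) +
    \sum_(u in t) ((enum_rank v < enum_rank u) && (enum_rank (c u) < enum_rank (c v)))))%N.
  rewrite -!big_split /=; apply: eq_bigr => u ut.
  have uv : u != v by apply: contraNneq vt => <-.
  have cuv : c u != c v.
    by apply: contra uv => /eqP /injc; rewrite !inE eqxx ut orbT => /(_ isT isT) ->.
  case: (ltngtP (enum_rank u) (enum_rank v)) => h.
  - case: (ltngtP (enum_rank (c u)) (enum_rank (c v))) => h' //.
    by move/val_inj/enum_rank_inj: h'; move/eqP: cuv.
  - by rewrite /= addn0 add0n.
  - by move/val_inj/enum_rank_inj: h; move/eqP: uv.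
move: H.
set S1 := (\sum_(u in t) ((enum_rank v < enum_rank u) && _))%N.
set S2 := (\sum_(u in t) ((enum_rank u < enum_rank v) && _))%N.
set S3 := (\sum_(u in t) (enum_rank (c u) < enum_rank (c v)))%N.
set S4 := (\sum_(u in t) (enum_rank u < enum_rank v))%N.
move=> H.
have -> : (S1 + (S2 + I) + S3 = I + S4 + (S1 + S1))%N.
  by lia.
by rewrite oddD addnn odd_double addbF.
Qed.
Local Open Scope ring_scope.
Lemma pos_add (V : finType) (u v : V) (t : {set V}) :
  u \notin t -> v \notin t -> u != v ->
  pos u (u |: (v |: t)) = (pos u (u |: t) + (enum_rank v < enum_rank u))%N.
Proof.
move=> ut vt uv.
have uvt : u \notin v |: t by rewrite !inE negb_or uv ut.
rewrite !pos_sum (big_setU1 _ uvt) (big_setU1 _ ut) (big_setU1 _ vt) /= ltnn.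
by rewrite !add0n addnC.
Qed.

Lemma bdry_bdry (V : finType) (x : chains V) : bdry (bdry x) = 0.
Proof.
apply/ffunP => t; rewrite !ffunE; case: eqP => // t0.
set F := fun v u => if (v \notin t) && (u \notin t) && (u != v) then
   ((-1) ^+ (pos v (v |: t) + pos u (u |: (v |: t)))%N * x (u |: (v |: t)) : int) else 0.
have -> : \sum_(v | v \notin t) (-1) ^+ pos v (v |: t) * bdry x (v |: t) =
          \sum_v \sum_u F v u.
  rewrite big_mkcond /=; apply: eq_bigr => v _.
  rewrite ffunE.
  have -> : (v |: t == set0) = false by apply/negbTE/set0Pn; exists v; rewrite !inE eqxx.
  case vt: (v \notin t); last by rewrite /F big1 // => u _; rewrite vt.
  rewrite mulr_sumr big_mkcond /=; apply: eq_bigr => u _.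
  rewrite /F vt !inE negb_or /=.
  by case: (u == v); case: (u \in t) => //=; rewrite mulrA -exprD.
have anti : forall u v, F u v = - F v u.
  move=> u v; rewrite /F.
  case uv: (v != u); last by rewrite eq_sym uv !andbF oppr0.
  rewrite eq_sym uv !andbT andbC.
  case: (v \notin t) / idP => vt; case: (u \notin t) / idP => ut //=; try by rewrite oppr0.
  have uv' : u != v by rewrite eq_sym.
  rewrite (pos_add vt ut uv) (pos_add ut vt uv') (setUCA [set v] [set u] t).
  rewrite -mulNr; congr (_ * _).
  rewrite !exprD.
  case: (ltngtP (enum_rank u) (enum_rank v)) => h /=.
  - by rewrite expr1 expr0 mulr1 mulrN1 mulrN mulrC.
  - by rewrite expr1 expr0 mulr1 mulrN1 mulrN opprK mulrC.
  - by move/val_inj/enum_rank_inj: h => e; rewrite e eqxx in uv.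
set S := \sum_v \sum_u F v u.
have : S = - S.
  rewrite {1}/S exchange_big /= /S -sumrN; apply: eq_bigr => u _.
  rewrite -sumrN; apply: eq_bigr => v _; exact: anti.
move/eqP; rewrite -addr_eq0 -mulr2n mulrn_eq0 /=.
by move/eqP.
Qed.

Definition sg (V C : finType) (c : V -> C) (s : {set V}) : int := (-1) ^+ inv c s.

Lemma sg_sq (V C : finType) (c : V -> C) (s : {set V}) : sg c s * sg c s = 1.
Proof. by rewrite /sg -exprD addnn -signr_odd odd_double. Qed.

Lemma sg_step (V C : finType) (c : V -> C) (v : V) (s : {set V}) : v \in s -> {in s &, injective c} ->
  (-1) ^+ pos (c v) (c @: s) * sg c s = sg c (s :\ v) * (-1) ^+ pos v s.
Proof.
move=> vs inj.
move: (@sign_par V C c v (s :\ v)); rewrite setD1K // setD11 => /(_ isT inj) h.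
by rewrite /sg -!exprD addnC -signr_odd h signr_odd.
Qed.

Definition fmap (V C : finType) (X : {set {set V}}) (c : V -> C) (x : chains V) : chains C :=
  [ffun sig : {set C} => \sum_(s in X | c @: s == sig) sg c s * x s].

Definition pre (V C : finType) (X : {set {set V}}) (c : V -> C) (sig : {set C}) :=
  [pick s : {set V} | (s \in X) && (c @: s == sig)].

Definition lift (V C : finType) (X : {set {set V}}) (c : V -> C) (w : chains C) : chains V :=
  [ffun s : {set V} => if pre X c (c @: s) == Some s then sg c s * w (c @: s) else 0].

Lemma pre_some (V C : finType) (X : {set {set V}}) (c : V -> C) (sig : {set C}) (s0 : {set V}) :
  pre X c sig = Some s0 -> s0 \in X /\ c @: s0 = sig.
Proof.
rewrite /pre; case: pickP => [s /andP [sX /eqP cs] [<-] | _ //]; by [].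
Qed.

Lemma pre_none (V C : finType) (X : {set {set V}}) (c : V -> C) (sig : {set C}) :
  pre X c sig = None -> forall s, s \in X -> c @: s != sig.
Proof.
rewrite /pre; case: pickP => [s _ // | none _ s sX].
by move: (none s); rewrite sX /= => ->.
Qed.

Lemma inj_face (V C : finType) (X : {set {set V}}) (c : V -> C) :
  is_complex X -> proper_coloring X c -> forall s, s \in X -> {in s &, injective c}.
Proof.
move=> cX pc s sX u w us ws e; apply/eqP; apply: contraT => uw.
have : [set u; w] \in X.
  apply: cX sX _; apply/subsetP => z; rewrite !inE => /orP [/eqP -> | /eqP ->] //.
by move/(pc u w uw); rewrite e eqxx.
Qed.

Lemma imsetD1_inj (V C : finType) (c : V -> C) (s : {set V}) (v : V) :
  {in s &, injective c} -> v \in s -> c @: (s :\ v) = (c @: s) :\ c v.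
Proof.
move=> inj vs; apply/setP => z; rewrite !inE.
apply/imsetP/andP => [[w wsv ->] | [zv /imsetP [w ws ze]]].
  move: wsv; rewrite !inE => /andP [wv ws]; split; last exact: imset_f.
  by apply: contra wv => /eqP e; apply/eqP; exact: inj e.
exists w => //; rewrite !inE ws andbT; apply: contraNneq zv => wv.
  by rewrite ze wv.
Qed.

Lemma fmap_bdry (V C : finType) (X : {set {set V}}) (c : V -> C) (x : chains V) :
  is_complex X -> proper_coloring X c -> (forall s, x s != 0 -> s \in X) ->
  fmap X c (bdry x) = bdry (fmap X c x).
Proof.
move=> cX pc xX; have inj := inj_face cX pc.
apply/ffunP => sig; rewrite !ffunE.
case: (sig =P set0) => [-> | sig0].
  rewrite big1 // => t /andP [_]; rewrite imset_eq0 => /eqP ->.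
  by rewrite ffunE eqxx mulr0.
set H := fun s v => if c @: (s :\ v) == sig then sg c (s :\ v) * (-1) ^+ pos v s * x s else 0.
transitivity (\sum_(s : {set V}) \sum_(v in s) H s v).
  rewrite big_mkcond /=.
  transitivity (\sum_(t : {set V}) \sum_(v : V | v \notin t)
     (if c @: t == sig then sg c t * (-1) ^+ pos v (v |: t) * x (v |: t) else 0)).
    apply: eq_bigr => t _; rewrite ffunE.
    case: (c @: t =P sig) => ct; last by rewrite andbF big1.
    have t0 : (t == set0) = false.
      by apply/eqP => t0; apply: sig0; rewrite -ct t0 imset0.
    rewrite t0 andbT.
    case: (boolP (t \in X)) => tX.
      by rewrite mulr_sumr; apply: eq_bigr => v _; rewrite mulrA.
    symmetry; apply: big1 => v vt.
    have -> : x (v |: t) = 0.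
      apply/eqP; apply: contraNT tX => /xX h; exact: cX h (subsetUr _ _).
    by rewrite mulr0.
  under [in LHS]eq_bigr => t _ do rewrite big_mkcond /=.
  rewrite [LHS]exchange_big /=.
  transitivity (\sum_(v : V) \sum_(s : {set V}) (if v \in s then H s v else 0)).
    apply: eq_bigr => v _.
    rewrite -big_mkcond /= (reindex_onto (fun s => s :\ v) (fun t => v |: t)) /=;
      last by move=> t vt; rewrite setU1K.
    rewrite big_mkcond /=; apply: eq_bigr => s _.
    rewrite in_setD1 eqxx /=.
    case: (boolP (v \in s)) => vs.
      by rewrite setD1K // eqxx.
    have -> : (v |: (s :\ v) == s) = false.
      by apply: contraNF vs => /eqP <-; exact: setU11.
    by [].
  by rewrite exchange_big /=; apply: eq_bigr => s _; rewrite -big_mkcond.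
symmetry.
transitivity (\sum_(g : C) \sum_(s : {set V}) (if (g \notin sig) && (s \in X) && (c @: s == g |: sig)
   then (-1) ^+ pos g (g |: sig) * (sg c s * x s) else 0)).
  rewrite big_mkcond; apply: eq_bigr => g _; rewrite ffunE.
  case: (g \notin sig); last by symmetry; apply: big1.
  by rewrite mulr_sumr big_mkcond; apply: eq_bigr => s _ /=; case: ifP.
rewrite exchange_big /=; apply: eq_bigr => s _.
case: (boolP (x s == 0)) => [/eqP xs0 | /xX sX].
  rewrite !big1 // => ? _; rewrite /H xs0 !mulr0; by case: ifP.
have injs := inj s sX.
rewrite (bigID (fun g => g \in c @: s)) /= [X in _ + X]big1 ?addr0; last first.
  move=> g gs; case: ifP => // /andP [_ /eqP e].
  by rewrite e setU11 in gs.
rewrite big_imset //=; apply: eq_bigr => v vs.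
rewrite sX andbT /H (imsetD1_inj injs vs).
have cvs : c v \in c @: s := imset_f c vs.
case: (boolP (c @: s :\ c v == sig)) => [/eqP e | ne].
  rewrite -e setD11 /= setD1K // eqxx /=.
  by rewrite mulrA (sg_step vs injs).
case: ifP => // /andP [cvs' /eqP e].
by rewrite e setU1K ?eqxx in ne.
Qed.

Lemma chain_in (V : finType) (X : {set {set V}}) n (x : chains V) :
  is_chain X n x -> forall s, x s != 0 -> s \in X.
Proof. by move=> h s /h /andP []. Qed.

Lemma fmapD (V C : finType) (X : {set {set V}}) (c : V -> C) x y :
  fmap X c (x + y) = fmap X c x + fmap X c y.
Proof.
apply/ffunP => sig; rewrite !ffunE -big_split /=; apply: eq_bigr => s _.
by rewrite ffunE mulrDr.
Qed.

Lemma fmap0 (V C : finType) (X : {set {set V}}) (c : V -> C) : fmap X c 0 = 0.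
Proof. by apply/ffunP => sig; rewrite !ffunE big1 // => s _; rewrite ffunE mulr0. Qed.

Lemma fmapMn (V C : finType) (X : {set {set V}}) (c : V -> C) x n :
  fmap X c (x *+ n) = fmap X c x *+ n.
Proof. by elim: n => [|n IH]; rewrite ?fmap0 // !mulrS fmapD IH. Qed.

Lemma bdryD (V : finType) (x y : chains V) : bdry (x + y) = bdry x + bdry y.
Proof.
apply/ffunP => t; rewrite !ffunE; case: ifP => _; first by rewrite addr0.
rewrite -big_split /=; apply: eq_bigr => v _; by rewrite ffunE mulrDr.
Qed.

Lemma bdry0 (V : finType) : bdry (0 : chains V) = 0.
Proof.
apply/ffunP => t; rewrite !ffunE; case: ifP => // _.
by rewrite big1 // => v _; rewrite ffunE mulr0.
Qed.

Lemma bdryMn (V : finType) (x : chains V) n : bdry (x *+ n) = bdry x *+ n.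
Proof. by elim: n => [|n IH]; rewrite ?bdry0 // !mulrS bdryD IH. Qed.

Lemma chainMn (V : finType) (X : {set {set V}}) k (x : chains V) n :
  is_chain X k x -> is_chain X k (x *+ n).
Proof.
move=> h s; rewrite ffunMnE => hs; apply: h; apply: contraNneq hs => ->.
by rewrite mul0rn.
Qed.

Lemma chain0 (V : finType) (X : {set {set V}}) k : is_chain X k (0 : chains V).
Proof. by move=> s; rewrite ffunE eqxx. Qed.

Lemma bdry_chain (V : finType) (X : {set {set V}}) n (e : chains V) :
  is_complex X -> is_chain X n.+1 e -> is_chain X n (bdry e).
Proof.
move=> cX ec t; rewrite ffunE; case: ifP => [_|t0]; first by rewrite eqxx.
case: (pickP (fun v => (v \notin t) && (e (v |: t) != 0))) => [v /andP [vt ev] _ | none].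
  have /andP [vX /eqP cv] := ec _ ev.
  rewrite (cX _ _ vX (subsetUr _ _)) /=.
  by move: cv; rewrite cardsU1 vt add1n => -[->].
rewrite big1 ?eqxx // => v vt.
by move: (none v); rewrite vt /= => /negbFE/eqP ->; rewrite mulr0.
Qed.

Lemma fmap_chain (V C : finType) (X : {set {set V}}) (c : V -> C) n (x : chains V) :
  is_complex X -> proper_coloring X c ->
  is_chain X n x -> is_chain (pattern_complex X c) n (fmap X c x).
Proof.
move=> cX pc xc sig; rewrite ffunE.
case: (pickP (fun s => (s \in X) && (c @: s == sig) && (x s != 0))) =>
   [s /andP [/andP [sX /eqP cs] xs] _ | none].
  have /andP [_ /eqP cds] := xc _ xs.
  rewrite -cs card_in_imset ?cds ?eqxx ?andbT; last exact: inj_face cX pc s sX.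
  by apply/imsetP; exists s.
rewrite big1 ?eqxx // => s /andP [sX cs].
by move: (none s); rewrite sX cs /= => /negbFE/eqP ->; rewrite mulr0.
Qed.

Lemma lift_chain (V C : finType) (X : {set {set V}}) (c : V -> C) n (w : chains C) :
  is_complex X -> proper_coloring X c ->
  is_chain (pattern_complex X c) n w -> is_chain X n (lift X c w).
Proof.
move=> cX pc wc s; rewrite ffunE.
case e: (pre X c (c @: s)) => [s0|]; last by have -> : (None == Some s) = false by []; rewrite eqxx.
rewrite (inj_eq Some_inj); case: (s0 =P s) => [es | _]; last by rewrite eqxx.
subst s0; have [sX _] := pre_some e.
move=> h; have /wc /andP [_ /eqP cd] : w (c @: s) != 0.
  by apply: contraNneq h => ->; rewrite mulr0.
by rewrite sX -cd card_in_imset ?eqxx //; exact: inj_face cX pc s sX.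
Qed.

Lemma fmap_lift (V C : finType) (X : {set {set V}}) (c : V -> C) n (w : chains C) :
  is_chain (pattern_complex X c) n w -> fmap X c (lift X c w) = w.
Proof.
move=> wc; apply/ffunP => sig; rewrite ffunE.
case e: (pre X c sig) => [s0|].
  have [s0X cs0] := pre_some e.
  rewrite (bigD1 s0) /=; last by rewrite s0X cs0 eqxx.
  rewrite big1 ?addr0.
    rewrite ffunE cs0 e; case: eqP => // _; by rewrite mulrA sg_sq mul1r.
  move=> s /andP [/andP [sX /eqP cs] ss0].
  by rewrite ffunE cs e (inj_eq Some_inj) eq_sym (negbTE ss0) mulr0.
have -> : w sig = 0.
  apply/eqP; apply: contraT => /wc /andP [/imsetP [s sX sige] _].
  by move: (pre_none e sX); rewrite sige eqxx.
by rewrite big1 // => s /andP [sX /eqP cs]; move: (pre_none e sX); rewrite cs eqxx.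
Qed.

Lemma f_ridge (V C : finType) (X : {set {set V}}) (c : V -> C) k (x : chains V) (s : {set V}) :
  (forall s t, s \in X -> t \in X -> #|s| = k.+1 -> #|t| = k.+1 ->
      pattern c s = pattern c t -> s = t) ->
  is_chain X k x -> s \in X -> #|s| = k.+1 -> fmap X c x (c @: s) = sg c s * x s.
Proof.
move=> uniq xc sX cs; rewrite ffunE (bigD1 s) /=; last by rewrite sX eqxx.
rewrite big1 ?addr0 // => s' /andP [/andP [s'X /eqP e] ne].
have -> : x s' = 0.
  apply/eqP; apply: contraT => /xc /andP [_ /eqP cs'].
  by rewrite (uniq s' s s'X sX cs' cs e) eqxx in ne.
by rewrite mulr0.
Qed.

Lemma fmap_inj (V C : finType) (X : {set {set V}}) (c : V -> C) k (x y : chains V) :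
  (forall s t, s \in X -> t \in X -> #|s| = k.+1 -> #|t| = k.+1 ->
      pattern c s = pattern c t -> s = t) ->
  is_chain X k x -> is_chain X k y -> fmap X c x = fmap X c y -> x = y.
Proof.
move=> uniq xc yc e; apply/ffunP => s.
case: (boolP ((s \in X) && (#|s| == k.+1))) => [/andP [sX /eqP cs] | h].
  have := congr1 (fun F : chains C => F (c @: s)) e => /=.
  rewrite (f_ridge uniq xc sX cs) (f_ridge uniq yc sX cs) => h.
  by rewrite -[x s]mul1r -(sg_sq c s) -mulrA h mulrA sg_sq mul1r.
have h0 : forall z : chains V, is_chain X k z -> z s = 0.
  by move=> z zc; apply/eqP; apply: contraT => /zc; rewrite (negbTE h).
by rewrite !h0.
Qed.

Theorem lemma2 (V C : finType) (X : {set {set V}}) (d : nat) (c : V -> C) :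
  is_complex X -> has_dim X d -> (0 < d)%N ->
  proper_coloring X c ->
  (forall s t, s \in X -> t \in X -> #|s| = d -> #|t| = d ->
      pattern c s = pattern c t -> s = t) ->
  tors_homology_iso X (pattern_complex X c) d.-1.
Proof.
move=> cX _ d0 pc.
case: d d0 => [//|k] _ uniq /=.
exists (fmap X c); split.
- exact: fmapD.
- move=> z [[zc zb] [n n0 [e ec ez]]]; split; first split.
  + exact: fmap_chain.
  + by rewrite -(fmap_bdry cX pc (chain_in zc)) zb fmap0.
  + exists n => //; exists (fmap X c e); first exact: fmap_chain.
    by rewrite -(fmap_bdry cX pc (chain_in ec)) ez fmapMn.
- move=> z [[zc zb] _]; split.
  + move=> [e' ec' ez']; have lec := lift_chain cX pc ec'.
    exists (lift X c e') => //.
    apply: (fmap_inj uniq (bdry_chain cX lec) zc).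
    by rewrite (fmap_bdry cX pc (chain_in lec)) (fmap_lift ec') ez'.
  + move=> [e ec ez]; exists (fmap X c e); first exact: fmap_chain.
    by rewrite -(fmap_bdry cX pc (chain_in ec)) ez.
- move=> w [[wc wb] [n n0 [e' ec' ez']]].
  have lc := lift_chain cX pc wc; have lec := lift_chain cX pc ec'.
  have hn : lift X c w *+ n = bdry (lift X c e').
    apply: (fmap_inj uniq (@chainMn _ _ _ _ n lc) (bdry_chain cX lec)).
    by rewrite fmapMn (fmap_lift wc) (fmap_bdry cX pc (chain_in lec)) (fmap_lift ec') ez'.
  exists (lift X c w).
    split; [split => // | exists n => //; exists (lift X c e') => //].
    apply/ffunP => t; apply/eqP.
    have := congr1 (fun F : chains V => F t) (congr1 (@bdry V) hn) => /=.
    by rewrite bdry_bdry bdryMn ffunMnE !ffunE => /eqP; rewrite mulrn_eq0 eqn0Ngt n0.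
  exists 0; first exact: chain0.
  by rewrite bdry0 (fmap_lift wc) subrr.
Qed.
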